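(* Let $t\ge2$, $k\ge 2$, and let $C$ be a binary linear $t$-CIS $[tk,k]$ code. Then $C$ is equivalent (by a permutation of coordinates) to a $t$-CIS $[tk,k]$ code $C_1$ which is obtained from some $t$-CIS $[t(k-1),k-1]$ code by the building up construction; that is, there exist invertible $(k-1)\times(k-1)$ matrices $A_1,\dots,A_t$ over $\mathbb{F}_2$ such that $(A_1\ \cdots\ A_t)$ generates a $t$-CIS $[t(k-1),k-1]$ code, and choices of $\mathbf x_j\in\mathbb{F}_2^{k-1}$, $y_{ij}\in\mathbb{F}_2$, such that $C_1$ is generated by the matrix $G_1$ of the building up construction.
   Context: Building up construction: given invertible $m\times m$ matrices $A_1,\dots,A_t$ over $\mathbb{F}_2$ with rows $A_j(\mathbf r_1),\dots,A_j(\mathbf r_m)$, vectors $\mathbf x_j\in\mathbb{F}_2^m$ and bits $y_{ij}$ ($1\le i\le m$, $1\le j\le t$), let $c_{ij}\in\mathbb{F}_2$ be the unique elements with $\mathbf x_j=\sum_i c_{ij}A_j(\mathbf r_i)$ and $z_j=1+\sum_i c_{ij}y_{ij}$; $G_1$ is the $(m+1)\times t(m+1)$ matrix whose first row is $(z_1,\mathbf x_1,z_2,\mathbf x_2,\dots,z_t,\mathbf x_t)$ and whose $(i+1)$-th row is $(y_{i1},A_1(\mathbf r_i),y_{i2},A_2(\mathbf r_i),\dots,y_{it},A_t(\mathbf r_i))$. A binary linear $[tk,k]$ code is $t$-CIS if its coordinate set can be partitioned into $t$ pairwise disjoint information sets, an information set being a set of $k$ coordinates whose columns in a generator matrix are linearly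 independent. *)

(* Defs.v *)
From HB Require Import structures.
From mathcomp Require Import all_boot all_order all_algebra all_fingroup.
Set Implicit Arguments. Unset Strict Implicit. Unset Printing Implicit Defensive.
Import GRing.Theory.
Local Open Scope ring_scope.

(* Coordinates of F_2^(t*n) are grouped into t consecutive blocks of size n:
   coordinate c lies in block c %/ n at offset c %% n. *)
Lemma blk_proof (t n : nat) (c : 'I_(t * n)) : (c %/ n < t)%N.
Proof.
case: n c => [|n] c; first by case: c => c; rewrite muln0.
by rewrite ltn_divLR // ltn_ord.
Qed.

Lemma off_proof (t n : nat) (c : 'I_(t * n)) : (c %% n < n)%N.
Proof.
case: n c => [|n] c; first by case: c => c; rewrite muln0.
by rewrite ltn_pmod.
Qed.

Definition blk (t n : nat) (c : 'I_(t * n)) : 'I_t := Ordinal (blk_proof c).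
Definition off (t n : nat) (c : 'I_(t * n)) : 'I_n := Ordinal (off_proof c).

Definition catblocks (R : Type) (r t n : nat) (B : 'I_t -> 'M[R]_(r, n))
  : 'M[R]_(r, t * n) := \matrix_(i, c) B (blk c) i (off c).

Definition info_set (k n : nat) (G : 'M['F_2]_(k, n)) (S : {set 'I_n}) : bool :=
  (#|S| == k) &&
  (\rank (colsub (fun i : 'I_#|S| => enum_val (A := mem S) i) G) == #|S|).

Definition CIS (t k : nat) (G : 'M['F_2]_(k, t * k)) : Prop :=
  exists P : 'I_(t * k) -> 'I_t,
    forall j : 'I_t, info_set G [set c | P c == j].

(* Building-up construction, with m = k - 1. *)
Definition bu_c (m : nat) (A : 'M['F_2]_m) (x : 'rV['F_2]_m) : 'rV['F_2]_m :=
  x *m invmx A.   (* the unique c with x = sum_i c_i A(r_i) *)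

Definition bu_z (t m : nat) (A : 'I_t -> 'M['F_2]_m) (x : 'I_t -> 'rV['F_2]_m)
  (y : 'I_m -> 'I_t -> 'F_2) (j : 'I_t) : 'F_2 :=
  1 + \sum_(i < m) bu_c (A j) (x j) 0 i * y i j.

(* block j of G_1 :   ( z_j  x_j )
                      ( y_.j A_j ) *)
Definition bu_block (t m : nat) (A : 'I_t -> 'M['F_2]_m) (x : 'I_t -> 'rV['F_2]_m)
  (y : 'I_m -> 'I_t -> 'F_2) (j : 'I_t) : 'M['F_2]_(m.+1, m.+1) :=
  \matrix_(i, l)
    match unlift ord0 i, unlift ord0 l with
    | None, None => bu_z A x y j
    | None, Some l' => x j 0 l'
    | Some i', None => y i' j
    | Some i', Some l' => A j i' l'
    end.

Definition building_up (t m : nat) (A : 'I_t -> 'M['F_2]_m)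
  (x : 'I_t -> 'rV['F_2]_m) (y : 'I_m -> 'I_t -> 'F_2)
  : 'M['F_2]_(m.+1, t * m.+1) := catblocks (bu_block A x y).

(* Main.v *)
Require Import Defs.
From HB Require Import structures.
From mathcomp Require Import all_boot all_order all_algebra all_fingroup.
Set Implicit Arguments. Unset Strict Implicit. Unset Printing Implicit Defensive.
Import GRing.Theory.
Local Open Scope ring_scope.

Lemma F2_neq0 (a : 'F_2) : a != 0 -> a = 1.
Proof. case: a => [[|[|n]] //= Hn]; move=> _; exact/val_inj. Qed.

Lemma rowsub_img_sub (R : fieldType) n c p q (A : 'M[R]_(n, c))
  (f : 'I_p -> 'I_n) (g : 'I_q -> 'I_n) :
  (forall a, exists b, f a = g b) -> (rowsub f A <= rowsub g A)%MS.
Proof.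
move=> hfg; apply/row_subP => a; have [b fb] := hfg a.
by rewrite row_rowsub fb -row_rowsub row_sub.
Qed.

Lemma rank_colsub_img (R : fieldType) k n p q (G : 'M[R]_(k, n))
  (f : 'I_p -> 'I_n) (g : 'I_q -> 'I_n) :
  (forall a, exists b, f a = g b) -> (forall b, exists a, g b = f a) ->
  \rank (colsub f G) = \rank (colsub g G).
Proof.
move=> hfg hgf; rewrite -mxrank_tr -[RHS]mxrank_tr !trmx_mxsub.
by apply/eqP; rewrite eqn_leq !mxrankS //; apply: rowsub_img_sub.
Qed.

Lemma idx_proof t n (j : 'I_t) (l : 'I_n) : (j * n + l < t * n)%N.
Proof.
have := ltn_ord j; have := ltn_ord l => hl hj.
apply: (@leq_trans (j * n + n)); first by rewrite ltn_add2l.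
by rewrite -mulSnr leq_mul2r hj orbT.
Qed.

Definition idx t n (j : 'I_t) (l : 'I_n) : 'I_(t * n) := Ordinal (idx_proof j l).

Lemma blk_idx t n j l : blk (@idx t n j l) = j.
Proof.
apply/val_inj => /=; rewrite divnDl ?dvdn_mull // mulnK; last by case: n l => [[]|].
by rewrite divn_small ?addn0.
Qed.

Lemma off_idx t n j l : off (@idx t n j l) = l.
Proof. apply/val_inj => /=; by rewrite modnMDl modn_small. Qed.

Lemma idx_blk_off t n (c : 'I_(t * n)) : idx (blk c) (off c) = c.
Proof. by apply/val_inj => /=; rewrite -divn_eq. Qed.

Lemma blk_off_inj t n (c c' : 'I_(t * n)) : blk c = blk c' -> off c = off c' -> c = c'.
Proof. by move=> h1 h2; rewrite -(idx_blk_off c) -(idx_blk_off c') h1 h2. Qed.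

Lemma catblocks_info (r t n : nat) (B : 'I_t -> 'M['F_2]_(r, n)) (j : 'I_t) :
  #|[set c | @blk t n c == j]| = n /\
  \rank (colsub (fun i : 'I_#|[set c | @blk t n c == j]| => enum_val (A := mem [set c | @blk t n c == j]) i) (catblocks B))
   = \rank (B j).
Proof.
have himg : [set c | @blk t n c == j] = [set idx j l | l : 'I_n].
  apply/setP => c; rewrite inE; apply/eqP/imsetP => [<-|[l _ ->]].
    by exists (off c) => //; rewrite idx_blk_off.
  by rewrite blk_idx.
have hinj : injective (@idx t n j).
  by move=> l l' /(congr1 (@off t n)); rewrite !off_idx.
split; first by rewrite himg card_imset // card_ord.
have -> : B j = colsub (@idx t n j) (catblocks B).
  by apply/matrixP => i l; rewrite !mxE blk_idx off_idx.
apply: rank_colsub_img.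
  move=> a; have := enum_valP a; rewrite inE => /eqP hb.
  by exists (off (enum_val a)); rewrite -{1}(idx_blk_off (enum_val a)) hb.
move=> b; have hb : idx j b \in [set c | @blk t n c == j] by rewrite inE blk_idx.
by exists (enum_rank_in hb (idx j b)); rewrite enum_rankK_in.
Qed.
Lemma unlift0 n : unlift ord0 (ord0 : 'I_n.+1) = None.
Proof. by case: unliftP => // j /(congr1 val). Qed.

Lemma schur (m : nat) (B : 'M['F_2]_(m.+1)) (A : 'M['F_2]_m) :
  B \in unitmx -> A = \matrix_(i, l) B (lift ord0 i) (lift ord0 l) ->
  A \in unitmx ->
  B ord0 ord0 = 1 + \sum_(i < m) (\row_l B ord0 (lift ord0 l) *m invmx A) 0 i * B (lift ord0 i) ord0.
Proof.
move=> uB defA uA.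
set x := (\row_l B ord0 (lift ord0 l) : 'rV_m).
set c := x *m invmx A.
set s := \sum_(i < m) _.
suff hd : B ord0 ord0 - s = 1.
  by rewrite -hd subrK.
apply: F2_neq0; apply/negP => /eqP hd.
pose v : 'rV['F_2]_m.+1 := \row_i (if unlift ord0 i is Some i' then - c 0 i' else 1).
have hv : v *m B = 0.
  apply/rowP => l; rewrite [LHS]mxE [RHS]mxE big_ord_recl [v _ _]mxE unlift0.
  have hs : forall l, \sum_(i < m) v 0 (lift ord0 i) * B (lift ord0 i) l
                 = - \sum_(i < m) c 0 i * B (lift ord0 i) l.
    move=> l0; rewrite -sumrN; apply: eq_bigr => i _.
    by rewrite [v _ _]mxE liftK mulNr.
  rewrite hs mul1r.
  case: (unliftP ord0 l) => [l'|] ->.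
    have hcA : c *m A = x by rewrite /c mulmxKV.
    have := congr1 (fun M : 'rV_m => M 0 (l' : 'I_m)) hcA; rewrite !mxE => <-.
    rewrite defA; apply/eqP; rewrite subr_eq0; apply/eqP; apply: eq_bigr => i _.
    by rewrite !mxE.
  exact: hd.
have : v = 0 by rewrite -(mulmxK uB v) hv mul0mx.
move/(congr1 (fun M : 'rV_m.+1 => M 0 ord0)); rewrite !mxE unlift0.
move/eqP; by rewrite oner_eq0.
Qed.

Lemma rank_colsub_le (R : fieldType) k n p (G : 'M[R]_(k, n)) (f : 'I_p -> 'I_n) :
  (\rank (colsub f G) <= \rank G)%N.
Proof. by rewrite -mxrank_tr -[X in (_ <= X)%N]mxrank_tr trmx_mxsub mxrankS // rowsub_sub. Qed.

Theorem proposition6 (t m : nat) (G : 'M['F_2]_(m.+1, t * m.+1)) :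
  (2 <= t)%N -> (1 <= m)%N -> row_free G -> CIS G ->
  exists (s : 'S_(t * m.+1)) (A : 'I_t -> 'M['F_2]_m)
         (x : 'I_t -> 'rV['F_2]_m) (y : 'I_m -> 'I_t -> 'F_2),
    (forall j, A j \in unitmx) /\
    row_free (catblocks A) /\ CIS (catblocks A) /\
    row_free (building_up A x y) /\ CIS (building_up A x y) /\
    (building_up A x y == col_perm s G)%MS.
Proof.
move=> ht hm hfree [P hP].
have hcard j : #|[set c | P c == j]| = m.+1.
  by have /andP[/eqP h _] := hP j.
pose e j (l : 'I_m.+1) : 'I_(t * m.+1) :=
  enum_val (A := mem [set c | P c == j]) (cast_ord (esym (hcard j)) l).
have eP j l : P (e j l) = j.
  by have := enum_valP (cast_ord (esym (hcard j)) l); rewrite inE => /eqP.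
have einj j : injective (e j).
  by move=> l l' /enum_val_inj /cast_ord_inj.
have uGb j : colsub (e j) G \in unitmx.
  rewrite -row_free_unit /row_free.
  have /andP[_ /eqP hr] := hP j.
  rewrite (@rank_colsub_img _ _ _ _ _ _ _ (fun i : 'I_#|[set c | P c == j]| => enum_val (A := mem [set c | P c == j]) i)) ?hr ?hcard //.
    by move=> a; exists (cast_ord (esym (hcard j)) a).
  by move=> b; exists (cast_ord (hcard j) b); rewrite /e cast_ordK.
pose j0 : 'I_t := Ordinal (ltnW ht).
pose M := invmx (colsub (e j0) G).
have uM : M \in unitmx by rewrite unitmx_inv.
pose H j := M *m colsub (e j) G.
have uH j : H j \in unitmx by rewrite unitmx_mul uM uGb.
have hl j : exists l, \det (row' ord0 (col' l (H j))) != 0.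
  case: (pickP (fun l => \det (row' ord0 (col' l (H j))) != 0)) => [l hl'|hn].
    by exists l.
  move: (uH j); rewrite unitmxE unitfE (expand_det_row _ ord0) big1 ?eqxx // => l _.
  rewrite /cofactor; move: (hn l) => /= /negbFE/eqP ->; by rewrite !mulr0.
pose lj j := odflt ord0 [pick l | \det (row' ord0 (col' l (H j))) != 0].
have hlj j : \det (row' ord0 (col' (lj j) (H j))) != 0.
  rewrite /lj; case: pickP => [l -> //|hn].
  by have [l] := hl j; rewrite hn.
pose sg j (l : 'I_m.+1) : 'I_m.+1 := if unlift ord0 l is Some l' then lift (lj j) l' else lj j.
have sginj j : injective (sg j).
  move=> l l'; rewrite /sg.
  case: (unliftP ord0 l) => [a|] ->; case: (unliftP ord0 l') => [b|] ->.
  - by move/lift_inj ->.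
  - by move/eqP; rewrite eq_sym (negbTE (neq_lift _ _)).
  - by move/eqP; rewrite (negbTE (neq_lift _ _)).
  - by [].
have sgsurj j l : exists a, l = sg j a.
  case: (unliftP (lj j) l) => [l'|] ->.
    by exists (lift ord0 l'); rewrite /sg liftK.
  by exists ord0; rewrite /sg unlift0.
pose B j := colsub (sg j) (H j).
have uB j : B j \in unitmx.
  rewrite -row_free_unit /row_free.
  rewrite (@rank_colsub_img _ _ _ _ _ _ _ id).
    by rewrite mxsub_eq_id // mxrank_unit.
  by move=> a; exists (sg j a).
  by move=> b; have [a ->] := sgsurj j b; exists a.
pose A j : 'M['F_2]_m := \matrix_(i, l) B j (lift ord0 i) (lift ord0 l).
have uA j : A j \in unitmx.
  rewrite unitmxE unitfE.
  suff -> : A j = row' ord0 (col' (lj j) (H j)) by apply: hlj.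
  by apply/matrixP => i l; rewrite !mxE /sg liftK.
pose x j := (\row_l B j ord0 (lift ord0 l) : 'rV_m).
pose y i j := B j (lift ord0 i) ord0.
have hbu j : bu_block A x y j = B j.
  apply/matrixP => i l; rewrite mxE.
  case: (unliftP ord0 i) => [i'|] ->; case: (unliftP ord0 l) => [l'|] ->.
  - by rewrite /A mxE.
  - by [].
  - by rewrite /x mxE.
  - rewrite (schur (uB j) (erefl (A j)) (uA j)) /bu_z /bu_c. by [].
pose sf (c : 'I_(t * m.+1)) := e (blk c) (sg (blk c) (off c)).
have sfinj : injective sf.
  move=> c c' h.
  rewrite /sf in h.
  have hb : blk c = blk c'.
    have h1 := eP (blk c) (sg (blk c) (off c)).
    have h2 := eP (blk c') (sg (blk c') (off c')).
    by rewrite -h1 -h2 h.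
  apply: (@blk_off_inj t m.+1 c c' hb).
  move: h; rewrite -hb => /(einj (blk c)) /(sginj (blk c)). done.
pose s := perm sfinj.
exists s, A, x, y.
have hbuild : building_up A x y = M *m col_perm s G.
  apply/matrixP => i c; rewrite /building_up /catblocks [LHS]mxE hbu /B /H [LHS]mxE !mxE.
  by apply: eq_bigr => a _; rewrite !mxE permE.
have hbl j : building_up A x y = catblocks (bu_block A x y) by [].
split => //.
split.
  rewrite /row_free eqn_leq rank_leq_row /=.
  have [_ h2] := catblocks_info A j0.
  by rewrite -{1}(mxrank_unit (uA j0)) -h2 rank_colsub_le.
split.
  exists (@blk t m) => j; have [h1 h2] := catblocks_info A j.
  by rewrite /info_set h2 mxrank_unit // h1 eqxx.
split.
  rewrite /row_free eqn_leq rank_leq_row /=.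
  have [_ h2] := catblocks_info (bu_block A x y) j0.
  by rewrite -{1}(mxrank_unit (uB j0)) -hbu -h2 rank_colsub_le.
split.
  exists (@blk t m.+1) => j; have [h1 h2] := catblocks_info (bu_block A x y) j.
  by rewrite /info_set /building_up h2 hbu mxrank_unit // h1 eqxx.
rewrite hbuild; apply/andP; split; first exact: submxMl.
by rewrite -{1}(mulKmx uM (col_perm s G)) submxMl.
Qed.
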